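(* Let $v\ge 2$ and $s\ge 2$ be integers. Then (1) $K_{v}^{RT}(2,s,s)\le v^{s-2}(v^{2}-1)$; (2) $K_{v}^{RT}(3,s,2s-1)\le v(v^{s}-1)$.
   Context: For positive integers $m,s$, the RT poset $[m\times s]$ is the set $\{1,\ldots,ms\}$ partitioned into $m$ blocks $B_i=\{is+1,\ldots,(i+1)s\}$; each block is a chain under the usual order of the integers, and elements of different blocks are incomparable. An ideal is a down-closed subset; $\langle A\rangle$ denotes the smallest ideal containing $A$. For $x,y\in\mathbb{Z}_v^{ms}$, $d_{RT}(x,y)=|\langle\{i:x_i\neq y_i\}\rangle|$. A code $C\subseteq \mathbb{Z}_v^{ms}$ is an $R$-covering if every $x\in\mathbb{Z}_v^{ms}$ has some $c\in C$ with $d_{RT}(x,c)\le R$; $K_v^{RT}(m,s,R)$ is the smallest size of an $R$-covering. *)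

(* Defs.v *)
From mathcomp Require Import all_boot.
Set Implicit Arguments. Unset Strict Implicit. Unset Printing Implicit Defensive.

(* Positions of the RT poset [m x s] are 0-indexed: 'I_(m*s), position j
   (paper's element j+1) lies in block j %/ s; the alphabet Z_v is 'I_v
   (only equality of symbols matters for d_RT). *)
Definition word (v m s : nat) := {ffun 'I_(m * s) -> 'I_v}.

Definition rt_le (s : nat) (n : nat) (j i : 'I_n) : bool :=
  (j %/ s == i %/ s) && (j <= i).

Definition rt_ideal (s n : nat) (A : {set 'I_n}) : {set 'I_n} :=
  [set j | [exists i in A, rt_le s j i]].

Definition supp_diff (v m s : nat) (x y : word v m s) : {set 'I_(m * s)} :=
  [set i | x i != y i].

Definition dRT (v m s : nat) (x y : word v m s) : nat :=
  #|rt_ideal s (supp_diff x y)|.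

Definition is_coveringb (v m s R : nat) (C : {set word v m s}) : bool :=
  [forall x : word v m s, [exists c in C, dRT x c <= R]].

(* K_v^RT(m,s,R): minimum size of an R-covering code.  The whole space is
   always a covering, so #|word| is a valid neutral element for the min. *)
Definition K_RT (v m s R : nat) : nat :=
  \big[minn/#|{: word v m s}|]_(C : {set word v m s} | is_coveringb R C) #|C|.

(* Main.v *)
Require Import Defs.
From mathcomp Require Import all_boot.
Set Implicit Arguments. Unset Strict Implicit. Unset Printing Implicit Defensive.

Lemma card_block n s b k (A : {set 'I_n}) :
  (forall j, j \in A -> (j %/ s == b) && (j %% s < k)) -> #|A| <= k.
Proof.
move=> H; rewrite cardE -(size_map val) -[k](size_iota (b * s)).
apply: uniq_leq_size; first by rewrite (map_inj_uniq val_inj) enum_uniq.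
move=> y /mapP [j]; rewrite mem_enum => /H /andP [/eqP Hb Hk] ->.
rewrite mem_iota; change (b * s <= j < b * s + k).
by rewrite (divn_eq j s) Hb leq_addr /= ltn_add2l.
Qed.

Lemma div_lt m s (j : 'I_(m * s)) : 0 < m -> j %/ s < m.
Proof.
move=> mp; have : (j : nat) < m * s := ltn_ord j; move: (j : nat) => k.
by case: (posnP s) => [->|sp]; [rewrite divn0 | rewrite ltn_divLR].
Qed.

Lemma ideal_bound v m s (x c : word v m s) (K : nat -> nat) :
  (forall i : 'I_(m * s), x i != c i -> i %% s < K (i %/ s)) ->
  forall j, j \in rt_ideal s (supp_diff x c) -> j %% s < K (j %/ s).
Proof.
move=> H j; rewrite inE => /existsP [i /andP [Hi /andP [/eqP Hb Hle]]].
rewrite inE in Hi; have := H i Hi; rewrite -Hb; apply: leq_ltn_trans.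
move: Hle; rewrite {1}(divn_eq j s) {1}(divn_eq i s) Hb.
by rewrite leq_add2l.
Qed.

Lemma dRT_le2 v s (x c : word v 2 s) (K : nat -> nat) :
  (forall i : 'I_(2 * s), x i != c i -> i %% s < K (i %/ s)) ->
  dRT x c <= K 0 + K 1.
Proof.
move=> H; move: (ideal_bound H); rewrite /dRT.
set I := rt_ideal _ _ => HI; clearbody I.
have sub : I \subset [set j in I | j %/ s == 0] :|: [set j in I | j %/ s == 1].
  apply/subsetP => j Hj; rewrite !inE Hj /=.
  have := div_lt j.
  by move=> /(_ isT); case: (j %/ s) => [|[|]].
apply: leq_trans (subset_leq_card sub) _; apply: leq_trans (leq_card_setU _ _) _.
apply: leq_add;
  [apply: (card_block (s:=s) (b:=0)) | apply: (card_block (s:=s) (b:=1))];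
  move=> j; rewrite inE => /andP [Hj /eqP Hb];
  by rewrite Hb eqxx /=; move: (HI j Hj); rewrite Hb.
Qed.

Lemma dRT_le3 v s (x c : word v 3 s) (K : nat -> nat) :
  (forall i : 'I_(3 * s), x i != c i -> i %% s < K (i %/ s)) ->
  dRT x c <= K 0 + K 1 + K 2.
Proof.
move=> H; move: (ideal_bound H); rewrite /dRT.
set I := rt_ideal _ _ => HI; clearbody I.
have sub : I \subset [set j in I | j %/ s == 0] :|: [set j in I | j %/ s == 1]
   :|: [set j in I | j %/ s == 2].
  apply/subsetP => j Hj; rewrite !inE Hj /=.
  have := div_lt j.
  by move=> /(_ isT); case: (j %/ s) => [|[|[|]]].
apply: leq_trans (subset_leq_card sub) _; apply: leq_trans (leq_card_setU _ _) _.
apply: leq_add; first (apply: leq_trans (leq_card_setU _ _) _; apply: leq_add).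
- apply: (card_block (s:=s) (b:=0)) => j; rewrite inE => /andP [Hj /eqP Hb];
  by rewrite Hb eqxx /=; move: (HI j Hj); rewrite Hb.
- apply: (card_block (s:=s) (b:=1)) => j; rewrite inE => /andP [Hj /eqP Hb];
  by rewrite Hb eqxx /=; move: (HI j Hj); rewrite Hb.
- apply: (card_block (s:=s) (b:=2)) => j; rewrite inE => /andP [Hj /eqP Hb];
  by rewrite Hb eqxx /=; move: (HI j Hj); rewrite Hb.
Qed.

Lemma K_le v m s R (C : {set word v m s}) : is_coveringb R C -> K_RT v m s R <= #|C|.
Proof.
move=> HC; rewrite /K_RT.
have : C \in index_enum {set word v m s} by rewrite mem_index_enum.
elim: (index_enum _) => //= a r IH; rewrite inE big_cons.
case/orP => [/eqP <-|Cr]; first by rewrite HC geq_minl.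
by case: ifP => _; [apply: leq_trans (geq_minr _ _) (IH Cr) | apply: IH].
Qed.

From mathcomp Require Import zify.

Definition at_ v m s (z : 'I_v) (x : word v m s) (k : nat) : 'I_v :=
  if insub k is Some i then x i else z.

Lemma at_val v m s z (x : word v m s) (i : 'I_(m * s)) : at_ z x i = x i.
Proof. by rewrite /at_ valK. Qed.

Lemma at_nat v m s z (x : word v m s) (i : 'I_(m * s)) (k : nat) : k = i -> at_ z x k = x i.
Proof. by move=> ->; apply: at_val. Qed.

Lemma blk_eq s (i b : nat) : i %/ s = b -> i = b * s + i %% s.
Proof. by move=> <-; apply: divn_eq. Qed.

Lemma lc_lt s (i : nat) : 0 < s -> i %% s < s.
Proof. exact: ltn_pmod. Qed.

Section P2.
Variables (v s : nat) (z o : 'I_v).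
Hypothesis (hs : 2 <= s) (oz : o != z).

Let sp : 0 < s. Proof. by apply: leq_trans hs. Qed.

Definition C2 : {set word v 3 s} :=
  [set c : word v 3 s | [forall i : 'I_(3 * s), forall j : 'I_(3 * s), ((i %/ s == 2) && (j %/ s == 0) && (i %% s == j %% s)) ==> (c i == c j)]
        && [forall i : 'I_(3 * s), ((i %/ s == 1) && (i %% s < s.-1)) ==> (c i == z)]
        && [exists i : 'I_(3 * s), (i %/ s == 0) && (c i != z)]].

Definition isA (x : word v 3 s) := [exists i : 'I_(3 * s), (i %/ s == 0) && (x i != z)].
Definition isB (x : word v 3 s) := [exists i : 'I_(3 * s), (i %/ s == 2) && (x i != z)].
Definition src (x : word v 3 s) (l : nat) : 'I_v :=
  if isA x then at_ z x l else if isB x then at_ z x (2 * s + l)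
  else if l == 0 then o else z.
Definition cw (x : word v 3 s) : word v 3 s :=
  [ffun i : 'I_(3 * s) => if i %/ s == 1 then (if i %% s == s.-1 then x i else z) else src x (i %% s)].

Lemma cw_in x : cw x \in C2.
Proof.
rewrite inE; apply/andP; split; first (apply/andP; split).
- apply/forallP => i; apply/forallP => j; apply/implyP => /andP [/andP [/eqP hi /eqP hj] /eqP hl].
  by rewrite !ffunE hi hj hl.
- apply/forallP => i; apply/implyP => /andP [/eqP hi hl].
  by rewrite ffunE hi eqxx (ltn_eqF hl).
- case hA: (isA x).
    case/existsP: (hA) => i /andP [/eqP hi hx]; apply/existsP; exists i.
    rewrite hi eqxx ffunE hi /= /src hA (@at_nat _ _ _ _ _ i) //.
    by rewrite {2}(blk_eq hi) mul0n.
  case hB: (isB x).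
    case/existsP: (hB) => i /andP [/eqP hi hx].
    have hj : i %% s < 3 * s by apply: leq_trans (lc_lt i sp) _; rewrite leq_pmull.
    apply/existsP; exists (Ordinal hj) => /=.
    rewrite divn_small ?lc_lt // eqxx ffunE /= divn_small ?lc_lt // /= /src hA hB.
    rewrite modn_mod (@at_nat _ _ _ _ _ i) //.
    by rewrite {2}(blk_eq hi).
  have hj : 0 < 3 * s by rewrite muln_gt0.
  apply/existsP; exists (Ordinal hj) => /=.
  by rewrite div0n eqxx ffunE /= div0n /= /src hA hB mod0n eqxx.
Qed.

Lemma blk1 x (i : 'I_(3 * s)) :
  x i != (if i %% s == s.-1 then x i else z) -> i %% s < s.-1.
Proof.
case: ifP => [_|hl _]; first by rewrite eqxx.
have := lc_lt i sp; move/negbT: hl; lia.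
Qed.

Lemma cw_dist x : dRT x (cw x) <= 2 * s - 1.
Proof.
case hA: (isA x).
  apply: leq_trans (dRT_le3 (K := fun b => if b == 0 then 0 else if b == 1 then s.-1 else s) _) _;
    last by simpl; lia.
  move=> i; rewrite ffunE; have := div_lt i isT; case hb: (i %/ s) => [|[|[|//]]] _ /=.
  - rewrite /src hA (@at_nat _ _ _ _ _ i) ?eqxx //.
    by rewrite {2}(blk_eq hb) mul0n.
  - exact: blk1.
  - by move=> _; apply: lc_lt.
case hB: (isB x).
  apply: leq_trans (dRT_le3 (K := fun b => if b == 0 then s else if b == 1 then s.-1 else 0) _) _;
    last by simpl; lia.
  move=> i; rewrite ffunE; have := div_lt i isT; case hb: (i %/ s) => [|[|[|//]]] _ /=.
  - by move=> _; apply: lc_lt.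
  - exact: blk1.
  - rewrite /src hA hB (@at_nat _ _ _ _ _ i) ?eqxx //.
    by rewrite [X in _ = X](blk_eq hb).
apply: leq_trans (dRT_le3 (K := fun b => if b == 0 then 1 else if b == 1 then s.-1 else 1) _) _;
  last by simpl; lia.
move=> i; rewrite ffunE; have := div_lt i isT; case hb: (i %/ s) => [|[|[|//]]] _ /=.
- rewrite /src hA hB.
  move/negbT/existsPn: hA => /(_ i); rewrite hb eqxx /= negbK => /eqP ->.
  by case: ifP => [/eqP -> //| _]; rewrite eqxx.
- exact: blk1.
- rewrite /src hA hB.
  move/negbT/existsPn: hB => /(_ i); rewrite hb eqxx /= negbK => /eqP ->.
  by case: ifP => [/eqP -> //| _]; rewrite eqxx.
Qed.

Lemma C2_card : #|C2| <= v * (v ^ s - 1).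
Proof.
pose f (c : word v 3 s) := (([ffun l : 'I_s => at_ z c l] : {ffun 'I_s -> 'I_v}), at_ z c (s + s.-1)).
have inj : {in C2 &, injective f}.
  move=> c c'; rewrite !inE => /andP [/andP [/forallP H1 /forallP H2] _].
  move=> /andP [/andP [/forallP H1' /forallP H2'] _] [E1 E2].
  have B0 : forall i : 'I_(3*s), i %/ s == 0 -> c i = c' i.
    move=> i /eqP hb; have := congr1 (fun g : {ffun 'I_s -> 'I_v} => g (Ordinal (lc_lt i sp))) E1; rewrite !ffunE /=.
    have e : i %% s = i by rewrite {2}(blk_eq hb) mul0n.
    by rewrite !(@at_nat _ _ _ _ _ i).
  apply/ffunP => i; have := div_lt i isT; case hb: (i %/ s) => [|[|[|//]]] _.
  - by apply: B0; rewrite hb.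
  - case: (ltnP (i %% s) s.-1) => hl.
      by move: (H2 i) (H2' i); rewrite hb hl /= => /eqP -> /eqP ->.
    have e : s + s.-1 = i.
      have := lc_lt i sp; rewrite [X in _ = X](blk_eq hb); lia.
    by move: E2; rewrite !(@at_nat _ _ _ _ _ i).
  - have hj : i %% s < 3 * s by apply: leq_trans (lc_lt i sp) _; rewrite leq_pmull.
    have hj0 : Ordinal hj %/ s == 0 by rewrite /= divn_small ?lc_lt.
    move: (H1 i) (H1' i) => /forallP /(_ (Ordinal hj)) h1 /forallP /(_ (Ordinal hj)) h1'.
    move: h1 h1'; rewrite hb hj0 /= modn_mod eqxx /= => /eqP -> /eqP ->.
    exact: B0.
rewrite -(card_in_imset inj).
have sub : f @: C2 \subset ~: [set (([ffun=> z] : {ffun 'I_s -> 'I_v}), t) | t : 'I_v].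
  apply/subsetP => _ /imsetP [c hc ->]; rewrite inE; apply/negP => /imsetP [t _ [E _]].
  move: hc; rewrite inE => /andP [_ /existsP [i /andP [/eqP hb hi]]].
  move: E => /(congr1 (fun g : {ffun 'I_s -> 'I_v} => g (Ordinal (lc_lt i sp)))); rewrite !ffunE /=.
  have e : i %% s = i by rewrite {2}(blk_eq hb) mul0n.
  by rewrite (@at_nat _ _ _ _ _ i) // => hz; rewrite hz eqxx in hi.
apply: leq_trans (subset_leq_card sub) _.
have := cardsC [set (([ffun=> z] : {ffun 'I_s -> 'I_v}), t) | t : 'I_v].
rewrite card_imset; last by move=> t t' [].
rewrite card_prod card_ffun !card_ord => h.
by rewrite mulnBr muln1 mulnC -h addKn.
Qed.

Lemma part2 : K_RT v 3 s (2 * s - 1) <= v * (v ^ s - 1).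
Proof.
apply: leq_trans (K_le (C := C2) _) C2_card.
apply/forallP => x; apply/existsP; exists (cw x).
by rewrite cw_in cw_dist.
Qed.

End P2.

Section P1.
Variables (v s : nat) (z o : 'I_v).
Hypothesis (hs : 2 <= s) (oz : o != z).

Let sp : 0 < s. Proof. by apply: leq_trans hs. Qed.
Let h0 : 0 < 2 * s. Proof. by rewrite muln_gt0. Qed.
Let h1 : 1 < 2 * s. Proof. by apply: leq_trans hs _; rewrite leq_pmull. Qed.

Definition C1 : {set word v 2 s} :=
  [set c : word v 2 s | [exists i : 'I_(2 * s), (i < 2) && (c i != z)]
     && [forall i : 'I_(2 * s), (i %/ s == 1) ==>
          (c i == (if i %% s == s - 2 then at_ z c 0 else if i %% s == s.-1 then at_ z c 1 else z))]].

Definition pq (x : word v 2 s) : 'I_v * 'I_v :=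
  if (at_ z x 0 != z) || (at_ z x 1 != z) then (at_ z x 0, at_ z x 1)
  else if (at_ z x (s + (s - 2)) != z) || (at_ z x (s + s.-1) != z)
  then (at_ z x (s + (s - 2)), at_ z x (s + s.-1))
  else (o, z).

Definition cw1 (x : word v 2 s) : word v 2 s :=
  [ffun i : 'I_(2 * s) => if i %/ s == 0 then
       (if i == 0 :> nat then (pq x).1 else if i == 1 :> nat then (pq x).2 else x i)
     else (if i %% s == s - 2 then (pq x).1 else if i %% s == s.-1 then (pq x).2 else z)].

Lemma pq_nz x : ((pq x).1 != z) || ((pq x).2 != z).
Proof. by rewrite /pq; case: ifP => // _; case: ifP => //= _; rewrite oz. Qed.

Lemma cw1_0 x : at_ z (cw1 x) 0 = (pq x).1.
Proof. by rewrite (@at_nat _ _ _ _ _ (Ordinal h0)) // ffunE /= div0n. Qed.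

Lemma cw1_1 x : at_ z (cw1 x) 1 = (pq x).2.
Proof. by rewrite (@at_nat _ _ _ _ _ (Ordinal h1)) // ffunE /= divn_small. Qed.

Lemma cw1_in x : cw1 x \in C1.
Proof.
rewrite inE cw1_0 cw1_1; apply/andP; split.
  case/orP: (pq_nz x) => hn; apply/existsP.
    by exists (Ordinal h0); rewrite /= ffunE /= div0n.
  by exists (Ordinal h1); rewrite /= ffunE /= divn_small.
apply/forallP => i; apply/implyP => /eqP hb.
by rewrite ffunE hb.
Qed.

Lemma b0_eq (i : 'I_(2 * s)) : i %/ s = 0 -> i %% s = i.
Proof. by move=> hb; rewrite {2}(blk_eq hb) mul0n. Qed.

Lemma cw1_dist x : dRT x (cw1 x) <= s.
Proof.
rewrite /cw1 /pq.
case hA: ((at_ z x 0 != z) || (at_ z x 1 != z)) => /=.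
  apply: leq_trans (dRT_le2 (K := fun b => if b == 0 then 0 else s) _) _; last by [].
  move=> i; rewrite ffunE; have := div_lt i isT; case hb: (i %/ s) => [|[|//]] _ /=.
  - case: ifP => [/eqP e|_]; first by rewrite (@at_nat _ _ _ _ _ i) ?eqxx.
    case: ifP => [/eqP e|_]; first by rewrite (@at_nat _ _ _ _ _ i) ?eqxx.
    by rewrite eqxx.
  - by move=> _; apply: lc_lt.
case hB: ((at_ z x (s + (s - 2)) != z) || (at_ z x (s + s.-1) != z)) => /=.
  apply: leq_trans (dRT_le2 (K := fun b => if b == 0 then 2 else s - 2) _) _; last by simpl; lia.
  move=> i; rewrite ffunE; have := div_lt i isT; case hb: (i %/ s) => [|[|//]] _ /=.
  - rewrite (b0_eq hb).
    case: ifP => [/eqP -> //|_]; case: ifP => [/eqP -> //|_].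
    by rewrite eqxx.
  - have e : s + i %% s = i by rewrite [X in _ = X](blk_eq hb) mul1n.
    case: ifP => [/eqP el|hl2].
      by rewrite (@at_nat _ _ _ _ _ i) ?eqxx // -e el.
    case: ifP => [/eqP el|hl].
      by rewrite (@at_nat _ _ _ _ _ i) ?eqxx // -e el.
    move=> _; have := lc_lt i sp; move/negbT: hl; move/negbT: hl2; lia.
move/negbT: hA; rewrite negb_or !negbK => /andP [/eqP a0 /eqP a1].
move/negbT: hB; rewrite negb_or !negbK => /andP [/eqP b2 /eqP b1].
apply: leq_trans (dRT_le2 (K := fun b => if b == 0 then 1 else s.-1) _) _; last by simpl; lia.
move=> i; rewrite ffunE; have := div_lt i isT; case hb: (i %/ s) => [|[|//]] _ /=.
- rewrite (b0_eq hb).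
  case: ifP => [/eqP -> //|_]; case: ifP => [/eqP e|_]; last by rewrite eqxx.
  by rewrite -(@at_nat _ _ _ z x i 1) // a1 eqxx.
- have e : s + i %% s = i by rewrite [X in _ = X](blk_eq hb) mul1n.
  case: ifP => [/eqP el|hl2]; first by move=> _; rewrite el; lia.
  case: ifP => [/eqP el|hl].
    by rewrite -(@at_nat _ _ _ z x i (s + s.-1)) ?b1 ?eqxx // -e el.
  move=> _; have := lc_lt i sp; move/negbT: hl; lia.
Qed.

Lemma C1_card : #|C1| <= v ^ (s - 2) * (v ^ 2 - 1).
Proof.
pose f (c : word v 2 s) :=
  (([ffun l : 'I_(s - 2) => at_ z c (l + 2)] : {ffun 'I_(s - 2) -> 'I_v}), (at_ z c 0, at_ z c 1)).
have inj : {in C1 &, injective f}.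
  move=> c c'; rewrite !inE => /andP [_ /forallP H] /andP [_ /forallP H'] [E1 E2 E3].
  apply/ffunP => i; have := div_lt i isT; case hb: (i %/ s) => [|[|//]] _.
  - have hi : (i : nat) < s by rewrite -(b0_eq hb) lc_lt.
    case: (ltnP i 2) => hi2.
      case e: (i : nat) hi2 => [|[|//]] _.
        by move: E2; rewrite !(@at_nat _ _ _ _ _ i 0).
      by move: E3; rewrite !(@at_nat _ _ _ _ _ i 1).
    have hl : i - 2 < s - 2 by lia.
    move: E1 => /(congr1 (fun g : {ffun 'I_(s - 2) -> 'I_v} => g (Ordinal hl))); rewrite !ffunE /=.
    by rewrite !(@at_nat _ _ _ _ _ i (i - 2 + 2)) //; lia.
  - by move: (H i) (H' i); rewrite hb /= E2 E3 => /eqP -> /eqP ->.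
rewrite -(card_in_imset inj).
have sub : f @: C1 \subset ~: [set (g, (z, z)) | g : {ffun 'I_(s - 2) -> 'I_v}].
  apply/subsetP => _ /imsetP [c hc ->]; rewrite inE; apply/negP => /imsetP [g _ [_ E2 E3]].
  move: hc; rewrite inE => /andP [/existsP [i /andP [hi2 hi]] _].
  move: hi; case e: (i : nat) hi2 => [|[|//]] _.
    by rewrite -(@at_nat _ _ _ z c i 0) // E2 eqxx.
  by rewrite -(@at_nat _ _ _ z c i 1) // E3 eqxx.
apply: leq_trans (subset_leq_card sub) _.
have := cardsC [set (g, (z, z)) | g : {ffun 'I_(s - 2) -> 'I_v}].
rewrite card_imset; last by move=> g g' [].
rewrite !card_prod !card_ffun !card_ord => h.
by rewrite mulnBr muln1 -mulnn -h addKn.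
Qed.

Lemma part1 : K_RT v 2 s s <= v ^ (s - 2) * (v ^ 2 - 1).
Proof.
apply: leq_trans (K_le (C := C1) _) C1_card.
apply/forallP => x; apply/existsP; exists (cw1 x).
by rewrite cw1_in cw1_dist.
Qed.

End P1.

Theorem theorem4 (v s : nat) (hv : 2 <= v) (hs : 2 <= s) :
  K_RT v 2 s s <= v ^ (s - 2) * (v ^ 2 - 1) /\
  K_RT v 3 s (2 * s - 1) <= v * (v ^ s - 1).
Proof.
have h0 : 0 < v by apply: leq_trans hv.
pose z := Ordinal h0; pose o := Ordinal hv.
have oz : o != z by [].
by split; [apply: (part1 hs oz) | apply: (part2 hs oz)].
Qed.
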